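(* There is a constant $C$ such that for every $n\ge1$ there is a distribution $D$ on $\mathbb{R}_{\ge0}$ such that, when $v_1,\dots,v_n$ are i.i.d. with distribution $D$ (arriving in any order, in particular uniformly random order), every fixed-threshold algorithm (any threshold $\tau$ and any tie probability $\theta\in[0,1]$) has expected value at most $(1-1/e+C/n)\,\mathbb{E}[\max_iv_i]$. One such $D$ takes value $n/(e-1)$ with probability $1/n^2$ and value $(e-2)/(e-1)$ otherwise.
   Context: A fixed-threshold algorithm with threshold $\tau$ and tie probability $\theta$ observes the values in arrival order and gives the (single) item to the first buyer whose value exceeds $\tau$, or equals $\tau$ and wins an independent coin of bias $\theta$; its value is that buyer's value ($0$ if none). *)

(* Defs.v *)
From Stdlib Require Import Reals Lra List.
Import ListNotations.
Open Scope R_scope.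

(* A finitely supported distribution on R_{>=0}: list of (value, probability). *)
Definition dist := list (R * R).

Definition is_dist (D : dist) : Prop :=
  Forall (fun vp => 0 <= fst vp /\ 0 <= snd vp) D /\
  fold_right Rplus 0 (map snd D) = 1.

Definition accept_prob (tau theta v : R) : R :=
  if Rlt_dec tau v then 1 else if Req_EM_T v tau then theta else 0.

(* Expected value (over the tie coins) of the fixed-threshold algorithm on
   the values vs listed in arrival order. *)
Fixpoint ft_value (tau theta : R) (vs : list R) : R :=
  match vs with
  | [] => 0
  | v :: vs' => accept_prob tau theta v * v
                + (1 - accept_prob tau theta v) * ft_value tau theta vs'
  end.

(* All n-tuples of support points of D, with their (product) probabilities:
   the law of n i.i.d. samples from D. *)
Fixpoint iid_tuples (D : dist) (n : nat) : list (R * list R) :=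
  match n with
  | O => [(1, [])]
  | S m => flat_map (fun vp =>
             map (fun qt => (snd vp * fst qt, fst vp :: snd qt)) (iid_tuples D m)) D
  end.

Definition iid_expect (D : dist) (n : nat) (f : list R -> R) : R :=
  fold_right Rplus 0 (map (fun qt => fst qt * f (snd qt)) (iid_tuples D n)).

Definition max_list (vs : list R) : R := fold_right Rmax 0 vs.

Definition hard_dist (n : nat) : dist :=
  [ (INR n / (exp 1 - 1), 1 / (INR n ^ 2)) ;
    ((exp 1 - 2) / (exp 1 - 1), 1 - 1 / (INR n ^ 2)) ].

(* Main.v *)
Require Import Defs.
From Stdlib Require Import Reals List Lra.
Import ListNotations.
Open Scope R_scope.

Lemma sum_app (l1 l2 : list R) : fold_right Rplus 0 (l1 ++ l2) = fold_right Rplus 0 l1 + fold_right Rplus 0 l2.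
Proof. induction l1; simpl; [ring| rewrite IHl1; ring]. Qed.

Lemma iid_rec D m f : iid_expect D (S m) f =
  fold_right Rplus 0 (map (fun vp => snd vp * iid_expect D m (fun t => f (fst vp :: t))) D).
Proof.
  unfold iid_expect. cbn [iid_tuples].
  generalize (iid_tuples D m) as T. intro T.
  induction D as [|[v q] D' IH]; simpl; [reflexivity|].
  rewrite map_app, sum_app, IH. f_equal.
  clear. induction T as [|[q' t] T IHT]; simpl; [ring|]. rewrite IHT. ring.
Qed.

Lemma iid_lin D m f g c d : (forall t, g t = c + d * f t) ->
  iid_expect D m g = c * iid_expect D m (fun _ => 1) + d * iid_expect D m f.
Proof. intro Hg. unfold iid_expect. induction (iid_tuples D m) as [|[q t] T IH]; simpl; [ring|].
  rewrite IH, Hg. ring. Qed.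

Lemma iid_ext D m f g : (forall t, g t = f t) -> iid_expect D m g = iid_expect D m f.
Proof. intro Hg. unfold iid_expect. induction (iid_tuples D m) as [|[q t] T IH]; simpl; [ring|].
  rewrite IH, Hg. ring. Qed.

Lemma rec2 H L p m f : iid_expect [(H,p);(L,1-p)] (S m) f =
  p * iid_expect [(H,p);(L,1-p)] m (fun t => f (H::t)) + (1-p) * iid_expect [(H,p);(L,1-p)] m (fun t => f (L::t)).
Proof. rewrite iid_rec. simpl. ring. Qed.

Lemma mass2 H L p m : iid_expect [(H,p);(L,1-p)] m (fun _ => 1) = 1.
Proof. induction m. - unfold iid_expect. simpl. ring.
  - rewrite rec2. rewrite IHm. ring. Qed.

Lemma iid0 D f : iid_expect D 0 f = f [].
Proof. unfold iid_expect. simpl. ring. Qed.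

Section Two.
Variables (H L p tau th : R).
Let D := [(H,p);(L,1-p)].
Let AH := accept_prob tau th H.
Let AL := accept_prob tau th L.
Let b := p*(AH*H) + (1-p)*(AL*L).
Let r := p*AH + (1-p)*AL.
Let G m := iid_expect D m (ft_value tau th).

Lemma G_rec m : G (S m) = b + (1-r) * G m.
Proof.
  unfold G, D. rewrite rec2.
  rewrite (iid_lin _ _ (ft_value tau th) (fun t => ft_value tau th (H::t)) (AH*H) (1-AH)) by (intro; reflexivity).
  rewrite (iid_lin _ _ (ft_value tau th) (fun t => ft_value tau th (L::t)) (AL*L) (1-AL)) by (intro; reflexivity).
  rewrite !mass2. unfold b, r. ring.
Qed.

Lemma G0 : G 0 = 0.
Proof. unfold G. rewrite iid0. reflexivity. Qed.

Lemma G_closed m : G m * r = b * (1 - (1-r)^m).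
Proof. induction m. - rewrite G0. simpl. ring.
  - rewrite G_rec. simpl. rewrite Rmult_plus_distr_r, Rmult_assoc, (Rmult_comm (G m)), <- Rmult_assoc.
    replace ((1 - r) * r * G m) with ((1-r) * (G m * r)) by ring. rewrite IHm. ring. Qed.

Lemma G_bound m : 0 <= b -> 0 <= r <= 1 -> 0 <= G m <= INR m * b.
Proof. intros Hb Hr. induction m.
  - rewrite G0. simpl. lra.
  - rewrite G_rec, S_INR. nra. Qed.

Let F m c := iid_expect D m (fun t => Rmax c (max_list t)).

Lemma F_rec m c : F (S m) c = p * F m (Rmax c H) + (1-p) * F m (Rmax c L).
Proof. unfold F, D. rewrite rec2. f_equal; f_equal; apply iid_ext; intro t; simpl; apply Rmax_assoc. Qed.

Lemma F0 c : 0 <= c -> F 0 c = c.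
Proof. intro. unfold F. rewrite iid0. simpl. apply Rmax_left. lra. Qed.

Lemma F_big m c : L <= H -> H <= c -> 0 <= c -> F m c = c.
Proof. intros. induction m. - apply F0; auto.
  - rewrite F_rec, Rmax_left, Rmax_left by lra. rewrite IHm. ring. Qed.

Lemma F_L m : 0 <= L <= H -> F m L = H - (H-L)*(1-p)^m.
Proof. intros. induction m. - rewrite F0 by lra. simpl. ring.
  - rewrite F_rec, Rmax_right, Rmax_left by lra. rewrite IHm, F_big by lra. simpl. ring. Qed.

Lemma M_closed m : 0 <= L <= H -> iid_expect D (S m) max_list = H - (H-L)*(1-p)^(S m).
Proof. intros. unfold D. rewrite rec2.
  pose proof (F_big m H). pose proof (F_L m). unfold F, D in *.
  rewrite (iid_ext _ _ (fun t => Rmax H (max_list t))) by (intro; reflexivity).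
  rewrite (iid_ext _ _ (fun t => Rmax L (max_list t)) (fun t => max_list (L :: t))) by (intro; reflexivity).
  rewrite H1, H2 by lra. simpl. ring. Qed.

End Two.
From Coquelicot Require Import Coquelicot.
Lemma mvt0 (f df : R -> R) x :
  (forall y, is_derive f y (df y)) ->
  exists c, Rmin 0 x <= c <= Rmax 0 x /\ f x - f 0 = df c * x.
Proof.
  intros D. destruct (MVT_gen f 0 x df) as [c [Hc Heq]].
  - intros y _. apply D.
  - intros y _. apply continuity_pt_filterlim. apply (@ex_derive_continuous R_AbsRing R_NormedModule). eexists; apply D.
  - exists c. split; auto. rewrite Heq. ring.
Qed.

Lemma exp_T2_sign x : 0 <= x * (exp x - (1 + x + x^2/2)).
Proof.
  destruct (mvt0 (fun y => exp y - (1 + y + y^2/2)) (fun y => exp y - (1 + y)) x) as [c [Hc Heq]].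
  - intros y. auto_derive; auto. field.
  - cbv beta in Heq. rewrite exp_0 in Heq.
    assert (E: exp x - (1 + x + x^2/2) = (exp c - (1 + c)) * x) by (rewrite <- Heq; field).
    rewrite E. pose proof (exp_ineq1_le c).
    unfold Rmin, Rmax in Hc. destruct (Rle_dec 0 x); nra.
Qed.

Lemma exp_T3 x : 1 + x + x^2/2 + x^3/6 <= exp x.
Proof.
  destruct (mvt0 (fun y => exp y - (1 + y + y^2/2 + y^3/6)) (fun y => exp y - (1 + y + y^2/2)) x) as [c [Hc Heq]].
  - intros y. auto_derive; auto. field.
  - cbv beta in Heq. rewrite exp_0 in Heq.
    assert (E: exp x - (1 + x + x^2/2 + x^3/6) = (exp c - (1 + c + c^2/2)) * x) by (rewrite <- Heq; field).
    pose proof (exp_T2_sign c).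
    assert (0 <= (exp c - (1 + c + c^2/2)) * x).
    { remember (exp c - (1 + c + c^2/2)) as g.
      unfold Rmin, Rmax in Hc. destruct (Rle_dec 0 x).
      - destruct (Req_dec c 0) as [Hc0|Hn]. { rewrite Hc0, exp_0 in Heqg. nra. }
        assert (0 <= g) by (apply (Rmult_le_reg_l c); nra). nra.
      - destruct (Req_dec c 0) as [Hc0|Hn]. { rewrite Hc0, exp_0 in Heqg. nra. }
        assert (g <= 0) by (apply (Rmult_le_reg_l (-c)); nra). nra. }
    lra.
Qed.

Lemma e_bounds : 2.716 <= exp 1 <= 2.721.
Proof.
  assert (E: exp 1 = exp (1/4) ^ 4).
  { replace 1 with (1/4+1/4+1/4+1/4) at 1 by field. rewrite !exp_plus. ring. }
  pose proof (exp_T3 (1/4)) as L1.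
  pose proof (exp_T3 (-(1/4))) as L2.
  rewrite exp_Ropp in L2.
  set (y := exp (1/4)) in *.
  assert (0 < y) by apply exp_pos.
  assert (y <= 384/299).
  { assert (299/384 <= / y) by lra.
    apply (Rmult_le_reg_r (/y)). apply Rinv_0_lt_compat; lra.
    rewrite Rinv_r by lra. nra. }
  assert (1.2838 <= y) by lra.
  rewrite E. pose proof (pow_incr 1.2838 y 4 ltac:(lra)). pose proof (pow_incr y (384/299) 4 ltac:(lra)).
  simpl in *. split; lra.
Qed.
Section X.
Variable e s : R.
Hypothesis He : 2.716 <= e <= 2.721.
Lemma rA : 0 <= s <= 0.4 -> e * (1 + (-s) + (-s)^2/2 + (-s)^3/6) * (1 + (e-2)*s) >= e - s.
Proof. intros Hs.
  assert (E: e * (1 + (-s) + (-s)^2/2 + (-s)^3/6) * (1 + (e-2)*s) - (e - s)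
     = s * ((e*e-3*e+1) + e*(5/2-e)*s + e*(e/2-7/6)*s^2 - (e*(e-2)/6)*s^3)) by field.
  assert (c0 : e*e-3*e+1 >= 0.2286) by nra.
  assert (c1 : e*(5/2-e) >= -0.6014) by nra.
  assert (c2 : e*(e/2-7/6) >= 0.5196) by nra.
  assert (c3 : e*(e-2)/6 <= 0.3270) by nra.
  assert (q : 0.2286 - 0.6014*s + 0.5196*s^2 - 0.327*s^3 >= 0) by nra.
  assert (0 <= (e*e-3*e+1) + e*(5/2-e)*s + e*(e/2-7/6)*s^2 - (e*(e-2)/6)*s^3).
  { assert (e*(5/2-e)*s >= -0.6014*s) by nra.
    assert (e*(e/2-7/6)*s^2 >= 0.5196*s^2) by nra.
    assert ((e*(e-2)/6)*s^3 <= 0.3270*s^3) by (apply Rmult_le_compat_r; [apply pow_le|]; lra).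
    lra. }
  nra.
Qed.
Lemma rB : 0.4 <= s <= 2 -> (1 + (1-s) + (1-s)^2/2 + (1-s)^3/6) * (1 + (e-2)*s) >= e - s.
Proof. intros Hs.
  assert (E: (1 + (1-s) + (1-s)^2/2 + (1-s)^3/6) * (1 + (e-2)*s) - (e - s) =
    (s-1)^2 * ((3-e)/2 + (s-1)*(e/3-5/6) - (e-2)*(s-1)^2/6)) by field.
  assert (0 <= (3-e)/2 + (s-1)*(e/3-5/6) - (e-2)*(s-1)^2/6).
  { assert ((e-2)*(s-1)^2 <= 0.721*(s-1)^2) by (apply Rmult_le_compat_r; [apply pow2_ge_0|lra]).
    destruct (Rle_dec 1 s).
    - assert (0 <= (s-1)*(e/3-5/6)) by (apply Rmult_le_pos; lra). nra.
    - assert (0 <= (1-s)*(0.0737 - (e/3-5/6))) by (apply Rmult_le_pos; lra). nra. }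
  assert (0 <= (s-1)^2) by (apply pow2_ge_0).
  nra.
Qed.
Lemma rC : 2 <= s <= e -> (1 + (2-s) + (2-s)^2/2 + (2-s)^3/6) * (1 + (e-2)*s) >= e*(e - s).
Proof. intros Hs.
  assert (0 <= (s-2)^2 * (1/2 - (s-2)/6)) by (apply Rmult_le_pos; [apply pow2_ge_0| lra]).
  assert (T: 1 + (2-s) + (2-s)^2/2 + (2-s)^3/6 >= 3 - s) by nra.
  assert (P: 0 < 1 + (e-2)*s) by nra.
  assert ((3-s)*(1 + (e-2)*s) >= e*(e-s)) by nra.
  apply Rle_ge. eapply Rle_trans; [apply Rge_le; eassumption|].
  apply Rmult_le_compat_r; lra.
Qed.
End X.

Lemma key s : 0 <= s -> exp (-s) * (1 + (exp 1 - 2)*s) >= 1 - s / exp 1.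
Proof.
  intro Hs. pose proof e_bounds as He. set (e := exp 1) in *.
  assert (P : 0 < 1 + (e-2)*s) by nra.
  destruct (Rle_dec s 0.4).
  - pose proof (rA e s He (conj Hs r)). pose proof (exp_T3 (-s)).
    assert (exp (-s) * (1 + (e-2)*s) >= (1 + (-s) + (-s)^2/2 + (-s)^3/6) * (1 + (e-2)*s)) by
      (apply Rle_ge, Rmult_le_compat_r; lra).
    assert (1 - s/e = (e - s)/e) by (field; lra).
    rewrite H2. apply Rle_ge. apply (Rmult_le_reg_l e). lra.
    replace (e * ((e-s)/e)) with (e-s) by (field; lra). nra.
  - destruct (Rle_dec s 2).
    + pose proof (rB e s He (conj (Rlt_le _ _ (Rnot_le_lt _ _ n)) r)). pose proof (exp_T3 (1-s)).
      assert (X: exp (-s) = exp (1-s) / e) by (unfold e; replace (1-s) with (-s+1) by ring; rewrite exp_plus; field; apply Rgt_not_eq, exp_pos).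
      rewrite X.
      assert (1 - s/e = (e - s)/e) by (field; lra). rewrite H1.
      unfold Rdiv. rewrite Rmult_assoc, (Rmult_comm (/e)), <- Rmult_assoc.
      apply Rle_ge, Rmult_le_compat_r. apply Rlt_le, Rinv_0_lt_compat; lra.
      apply Rge_le in H. eapply Rle_trans; [apply H|]. apply Rmult_le_compat_r; lra.
    + destruct (Rle_dec s e).
      * pose proof (rC e s He (conj (Rlt_le _ _ (Rnot_le_lt _ _ n0)) r)). pose proof (exp_T3 (2-s)).
        assert (X: exp (-s) = exp (2-s) / (e*e)).
        { unfold e. replace (2-s) with (-s+1+1) by ring. rewrite !exp_plus.
          field. apply Rgt_not_eq, exp_pos. }
        rewrite X.
        assert (1 - s/e = e*(e - s)/(e*e)) by (field; lra). rewrite H1.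
        unfold Rdiv. rewrite Rmult_assoc, (Rmult_comm (/(e*e))), <- Rmult_assoc.
        apply Rle_ge, Rmult_le_compat_r. apply Rlt_le, Rinv_0_lt_compat; nra.
        apply Rge_le in H. eapply Rle_trans; [apply H|]. apply Rmult_le_compat_r; lra.
      * assert (1 - s/e <= 0).
        { assert (1 <= s/e) by (apply (Rmult_le_reg_l e); [lra|]; field_simplify; lra). lra. }
        pose proof (exp_pos (-s)). nra.
Qed.

Lemma bern x k : 0 <= x -> 1 + INR k * x <= (1+x)^k.
Proof. intro. induction k. simpl; lra. rewrite S_INR. simpl. assert (0 <= INR k) by apply pos_INR. nra. Qed.

Lemma powM x y k : (x*y)^k = x^k * y^k.
Proof. induction k; simpl; [ring| rewrite IHk; ring]. Qed.

Lemma exp_pow x k : exp x ^ k = exp (INR k * x).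
Proof. induction k. simpl. rewrite Rmult_0_l, exp_0. ring. rewrite S_INR. simpl. rewrite IHk, <- exp_plus. f_equal. ring. Qed.

Lemma acc_range tau th v : 0 <= th <= 1 -> 0 <= accept_prob tau th v <= 1.
Proof. intro. unfold accept_prob. destruct (Rlt_dec tau v); [lra|]. destruct (Req_EM_T v tau); lra. Qed.

Lemma acc_mono tau th L H : L < H -> 0 < accept_prob tau th L -> accept_prob tau th H = 1.
Proof. intros. unfold accept_prob in *. destruct (Rlt_dec tau H); auto.
  destruct (Rlt_dec tau L); [lra|]. destruct (Req_EM_T L tau); lra. Qed.

Lemma pow_upper p k : 0 <= p <= 1 -> (1-p)^k <= 1 / (1 + INR k * p).
Proof. intro. pose proof (bern p k (proj1 H)).
  assert (A: (1-p)^k * (1+p)^k <= 1).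
  { rewrite <- powM. apply Rle_trans with (1^k); [apply pow_incr; nra | rewrite pow1; lra]. }
  assert (0 <= (1-p)^k) by (apply pow_le; lra).
  assert (0 < 1 + INR k * p) by (pose proof (pos_INR k); nra).
  apply (Rmult_le_reg_r (1 + INR k * p)); auto.
  replace (1 / (1 + INR k * p) * (1 + INR k * p)) with 1 by (field; lra).
  assert ((1-p)^k*(1+INR k*p) <= (1-p)^k*(1+p)^k) by (apply Rmult_le_compat_l; lra). lra.
Qed.

Lemma lowY r k : 0 < r <= 1/2 -> exp (-(INR k * r)) * (1 - 2*(INR k*r)*r) <= (1-r)^k.
Proof. intro Hr. set (q := r/(1-r)).
  assert (Hq: 0 < q <= 2*r).
  { unfold q. split. apply Rdiv_lt_0_compat; lra.
    apply (Rmult_le_reg_r (1-r)); [lra|]. unfold Rdiv. rewrite Rmult_assoc, Rinv_l by lra. nra. }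
  assert (E1 : exp (-q) <= 1 - r).
  { pose proof (exp_ineq1_le q). rewrite exp_Ropp.
    assert (1 + q = /(1-r)) by (unfold q; field; lra).
    rewrite <- (Rinv_inv (1-r)). apply Rinv_le_contravar. apply Rinv_0_lt_compat; lra. lra. }
  assert (E2 : exp (-q) ^ k <= (1-r)^k) by (apply pow_incr; split; [apply Rlt_le, exp_pos|exact E1]).
  rewrite exp_pow in E2.
  replace (INR k * -q) with (-(INR k * r) + (-(INR k*r*q))) in E2 by (unfold q; field; lra).
  rewrite exp_plus in E2.
  pose proof (exp_ineq1_le (-(INR k * r * q))).
  pose proof (pos_INR k). pose proof (exp_pos (-(INR k * r))).
  assert (0 <= INR k * r) by nra.
  assert (INR k * r * q <= 2*(INR k*r)*r).
  { replace (2*(INR k*r)*r) with ((INR k * r) * (2*r)) by ring. apply Rmult_le_compat_l; lra. }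
  apply Rle_trans with (exp (- (INR k * r)) * exp (- (INR k * r * q))); [|exact E2].
  apply Rmult_le_compat_l; lra.
Qed.

Lemma su_bounds s : 0 <= s -> s * exp (-s) <= 1 /\ s^2 * exp(-s) <= 4.
Proof. intro. rewrite exp_Ropp. pose proof (exp_pos s).
  assert (s <= exp s) by (pose proof (exp_ineq1_le s); lra).
  assert (s^2 <= 4 * exp s).
  { assert (Es: exp s = exp(s/2)*exp(s/2)) by (rewrite <- exp_plus; f_equal; field). rewrite Es.
    pose proof (exp_ineq1_le (s/2)). nra. }
  split; apply (Rmult_le_reg_r (exp s)); auto; rewrite Rmult_assoc, Rinv_l by lra; lra.
Qed.

Lemma final_num e N V : 2.716 <= e <= 2.721 -> 1 <= N -> V <= 1 - 1/e + 10/N ->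
  V <= (1 - 1/e + 21/N) * (N/(N+1)).
Proof. intros He HN HV.
  assert ((1 - 1/e + 21/N) * (N/(N+1)) - (1 - 1/e + 10/N) = (10 + 1/e - 10/N) / (N+1)) by (field; lra).
  assert (0 <= (10 + 1/e - 10/N) / (N+1)).
  { apply Rdiv_le_0_compat; [|lra].
    assert (0 < 1/e) by (apply Rdiv_lt_0_compat; lra).
    assert (10/N <= 10) by (apply (Rmult_le_reg_r N); [lra|]; field_simplify; nra). lra. }
  lra.
Qed.

Theorem theorem5 :
  exists C : R, forall n : nat, (1 <= n)%nat ->
    is_dist (hard_dist n) /\
    forall tau theta : R, 0 <= theta <= 1 ->
      iid_expect (hard_dist n) n (ft_value tau theta)
        <= (1 - 1 / exp 1 + C / INR n) * iid_expect (hard_dist n) n max_list.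
Proof.
  exists 21. intros n Hn.
  pose proof e_bounds as He.
  assert (HN : 1 <= INR n) by (apply (le_INR 1) in Hn; simpl in Hn; exact Hn).
  unfold hard_dist.
  set (e := exp 1) in *.
  set (N := INR n) in *.
  set (H := N / (e-1)). set (L := (e-2)/(e-1)). set (p := 1 / N^2).
  assert (Hp : 0 < p <= 1).
  { unfold p. split. apply Rdiv_lt_0_compat; nra.
    apply (Rmult_le_reg_r (N^2)); [nra|]. unfold Rdiv. rewrite Rmult_assoc, Rinv_l by nra. nra. }
  assert (HL : 0 <= L <= 1 - 1/e).
  { unfold L. split. apply Rdiv_le_0_compat; lra.
    apply (Rmult_le_reg_r (e*(e-1))); [nra|]. field_simplify; [nra|lra|lra]. }
  assert (HLH : L < H).
  { unfold L, H. apply Rmult_lt_compat_r. apply Rinv_0_lt_compat; lra. lra. }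
  assert (HpH : p * H = 1 / ((e-1) * N)) by (unfold p, H; field; split; lra).
  split.
  { unfold is_dist. split.
    - constructor; [simpl; split; lra|constructor; [simpl; split; lra| constructor]].
    - simpl. ring. }
  intros tau th Hth.
  destruct n as [|m]; [inversion Hn|].
  assert (HM : N / (N+1) <= iid_expect [(H, p); (L, 1 - p)] (S m) max_list).
  { rewrite M_closed by lra.
    pose proof (pow_upper p (S m) (conj (Rlt_le _ _ (proj1 Hp)) (proj2 Hp))) as PU.
    fold N in PU.
    assert (E: 1 / (1 + N * p) = N / (N+1)) by (unfold p; field; lra). rewrite E in PU.
    assert ((H-L) * (1-p)^(S m) <= (H - L) * (N/(N+1))) by (apply Rmult_le_compat_l; lra).
    assert (H - (H-L) * (N/(N+1)) = N/(N+1)) by (unfold H, L; field; lra).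
    lra. }
  assert (Hk : 0 <= 1 - 1/e + 21/N).
  { assert (1/e <= 1) by (apply (Rmult_le_reg_r e); [lra|]; field_simplify; lra).
    assert (0 <= 21/N) by (apply Rdiv_le_0_compat; lra). lra. }
  apply Rle_trans with ((1 - 1/e + 21/N) * (N/(N+1))); [| apply Rmult_le_compat_l; assumption].
  apply (final_num e N); auto.
  set (G := iid_expect [(H, p); (L, 1 - p)] (S m) (ft_value tau th)).
  pose proof (acc_range tau th H Hth) as RH.
  pose proof (acc_range tau th L Hth) as RL.
  set (AH := accept_prob tau th H) in *.
  set (AL := accept_prob tau th L) in *.
  assert (Hinv : 0 < 1/e) by (apply Rdiv_lt_0_compat; lra).
  assert (H1e : 1/(e-1) <= 0.59) by (apply (Rmult_le_reg_r (e-1)); [lra|]; field_simplify; lra).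
  assert (H1e' : 0.63 <= 1 - 1/e) by (assert (1/e <= 0.37) by (apply (Rmult_le_reg_r e); [lra|]; field_simplify; lra); lra).
  assert (H10 : 0 <= 10/N) by (apply Rdiv_le_0_compat; lra).
  destruct (Req_dec AL 0) as [AL0|ALn].
  - pose proof (G_bound H L p tau th (S m)) as GB. fold AH AL G in GB. fold N in GB.
    rewrite AL0 in GB.
    assert (GB' : 0 <= G <= N * (p * (AH * H) + (1 - p) * (0 * L))) by (apply GB; [assert (0 <= AH*H) by (apply Rmult_le_pos; lra); nra | split; nra]).
    assert (NB : N * (p * (AH * H) + (1 - p) * (0 * L)) <= N * (p*H)).
    { apply Rmult_le_compat_l; [lra|]. assert (0 <= (1-AH)*H) by (apply Rmult_le_pos; lra).
      assert (0 <= p*((1-AH)*H)) by (apply Rmult_le_pos; lra). lra. }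
    rewrite HpH in NB.
    assert (N * (1 / ((e-1)*N)) = 1/(e-1)) by (field; lra).
    lra.
  - assert (ALp : 0 < AL) by (destruct RL as [[R1|R1] _]; [exact R1| exfalso; apply ALn; auto]).
    assert (AH1 : AH = 1) by (apply (acc_mono tau th L H); [lra| exact ALp]).
    pose proof (G_closed H L p tau th (S m)) as GC. fold AH AL G in GC.
    rewrite AH1 in GC.
    set (r := p * 1 + (1-p) * AL) in *.
    set (b := p * (1 * H) + (1 - p) * (AL * L)) in *.
    assert (GC' : G * r = b * (1 - (1-r)^(S m))) by exact GC. clear GC. rename GC' into GC.
    assert (Hr : p <= r <= 1) by (unfold r; nra).
    assert (Hb0 : 0 <= b).
    { unfold b. assert (0 <= AL*L) by (apply Rmult_le_pos; lra).
      assert (0 <= (1-p)*(AL*L)) by (apply Rmult_le_pos; lra). nra. }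
    assert (Hb : b <= p*H + r*L).
    { unfold b, r. assert (0 <= p*L) by (apply Rmult_le_pos; lra). nra. }
    assert (HY0 : 0 <= (1-r)^(S m)) by (apply pow_le; lra).
    destruct (Rle_dec (1/2) r).
    +
      assert (G1 : G * r <= b).
      { rewrite GC. assert (0 <= b*(1-r)^(S m)) by (apply Rmult_le_pos; lra). nra. }
      assert (0 <= p*H) by (apply Rmult_le_pos; lra).
      assert (G2 : G * r <= (2 * (p*H) + L) * r) by nra.
      assert (G3 : G <= 2 * (p*H) + L) by (apply (Rmult_le_reg_r r); [lra| exact G2]).
      rewrite HpH in G3.
      assert (2 * (1 / ((e-1)*N)) <= 10 / N).
      { apply (Rmult_le_reg_r N); [lra|]. field_simplify; lra. }
      lra.
    +
      set (s := N * r).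
      assert (Hs : 0 <= s) by (unfold s; nra).
      pose proof (lowY r (S m) (conj (Rlt_le_trans _ _ _ (proj1 Hp) (proj1 Hr)) (Rlt_le _ _ (Rnot_le_lt _ _ n)))) as LY.
      fold N s in LY.
      set (u := exp (-s)) in *.
      pose proof (key s Hs) as K. fold e u in K.
      pose proof (su_bounds s Hs) as [SU1 SU2]. fold u in SU1, SU2.
      assert (Hu : 0 < u) by (apply exp_pos).
      set (B := (1 + (e-2)*s) / ((e-1)*N)).
      assert (HbB : b <= B).
      { rewrite HpH in Hb. unfold B, L, s. 
        replace ((1 + (e - 2) * (N * r)) / ((e - 1) * N)) with (1 / ((e - 1) * N) + r * ((e - 2) / (e - 1))) by (field; lra).
        exact Hb. }
      assert (GB : G * r <= B * (1 - u + 2*s*r*u)).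
      { rewrite GC. assert (Y1 : 1 - (1 - r)^(S m) <= 1 - u + 2*s*r*u) by nra.
        assert (Y2 : 0 <= 1 - (1-r)^(S m)).
        { assert (Y3 : (1-r)^(S m) <= 1^(S m)) by (apply pow_incr; lra). rewrite pow1 in Y3. lra. }
        apply Rle_trans with (b * (1 - u + 2*s*r*u)); [apply Rmult_le_compat_l; lra|].
        apply Rmult_le_compat_r; [|lra]. nra. }
      assert (T1 : B * (1 - u) <= r * (1 - 1/e)).
      { assert (T1a : (1 + (e-2)*s)*(1-u) <= s * (e-1)*(e-1)/e).
        { replace (s * (e-1)*(e-1)/e) with (s * (e - 2) + s / e + 0) by (field; lra).
          assert (1 - s/e <= u * (1 + (e-2)*s)) by lra. nra. }
        replace (B * (1-u)) with (((1 + (e-2)*s)*(1-u)) * /((e-1)*N)) by (unfold B; field; lra).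
        replace (r * (1 - 1/e)) with ((s * (e-1)*(e-1)/e) * /((e-1)*N)) by (unfold s; field; lra).
        apply Rmult_le_compat_r; [apply Rlt_le, Rinv_0_lt_compat; nra| exact T1a]. }
      assert (T2 : B * (2*s*r*u) <= r * (10/N)).
      { unfold B.
        replace (1 + (e-2)*s) with (1 + (e-2)*s) by ring.
        assert (X: (1 + (e-2)*s) * (s*u) <= 5).
        { replace ((1 + (e-2)*s) * (s*u)) with (s*u + (e-2)*(s^2*u)) by ring.
          assert ((e-2)*(s^2*u) <= 1*4) by (apply Rmult_le_compat; try lra; nra). lra. }
        replace ((1 + (e - 2) * s) / ((e - 1) * N) * (2 * s * r * u)) with (2*r/((e-1)*N) * ((1 + (e-2)*s) * (s*u))) by (field; lra).
        apply Rle_trans with (2*r/((e-1)*N) * 5).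
        { apply Rmult_le_compat_l; [|exact X]. apply Rdiv_le_0_compat; nra. }
        replace (2*r/((e-1)*N) * 5) with (r * (10/N) * (1/(e-1))) by (field; lra).
        assert (0 <= r * (10/N)) by nra.
        assert (1/(e-1) <= 1) by lra. nra. }
      assert (G * r <= r * (1 - 1/e + 10/N)) by nra.
      assert (0 < r) by lra. nra.
Qed.
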